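(* Let $\mathbb F$ be a finite field and let $n,k,r$ be integers with $2\le r<k$. If $\mathcal C$ is an $(n,k,r,3)$-sequential locally repairable code (SLRC) over $\mathbb F$, then $$\frac{k}{n}\le\left(\frac{r}{r+1}\right)^2 .$$
   Context: Let $\mathcal C$ be an $[n,k]$ linear code over a finite field $\mathbb F$, with coordinates indexed by $[n]=\{1,\dots,n\}$. For $i\in[n]$, a set $R\subseteq[n]\setminus\{i\}$ is a recovering set of $i$ if there are nonzero $a_j\in\mathbb F$ ($j\in R$) with $x_i=\sum_{j\in R}a_jx_j$ for every codeword $x=(x_1,\dots,x_n)\in\mathcal C$. For $E\subseteq[n]$, $\mathcal C$ is $(E,r)$-recoverable if $E$ can be indexed as $E=\{i_1,\dots,i_{|E|}\}$ so that each $i_\ell$ has a recovering set $R_\ell\subseteq([n]\setminus E)\cup\{i_1,\dots,i_{\ell-1}\}$ with $|R_\ell|\le r$. $\mathcal C$ is an $(n,k,r,t)$-SLRC if it is $(E,r)$-recoverable for every $E\subseteq[n]$ with $|E|\le t$. *)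

(* Defs.v *)
From HB Require Import structures.
From mathcomp Require Import all_boot all_order all_algebra all_field.
Set Implicit Arguments. Unset Strict Implicit. Unset Printing Implicit Defensive.
Import GRing.Theory Num.Theory.
Local Open Scope ring_scope.

(* A linear code of length n over F is a subspace C of the row space 'rV[F]_n;
   it is an [n,k] code when \dim C = k.  Coordinates are indexed by 'I_n. *)

Definition recovering_set (F : fieldType) (n : nat) (C : {vspace 'rV[F]_n})
    (i : 'I_n) (R : {set 'I_n}) : Prop :=
  i \notin R /\
  exists a : 'I_n -> F, (forall j, j \in R -> a j != 0) /\
    forall x : 'rV[F]_n, x \in C -> x 0 i = \sum_(j in R) a j * x 0 j.

Definition recoverable (F : fieldType) (n : nat) (C : {vspace 'rV[F]_n})
    (E : {set 'I_n}) (r : nat) : Prop :=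
  exists s : seq 'I_n, uniq s /\ [set x in s] = E /\
    forall (s1 s2 : seq 'I_n) (i : 'I_n), s = s1 ++ i :: s2 ->
      exists R : {set 'I_n},
        recovering_set C i R /\
        R \subset (~: E) :|: [set x in s1] /\ (#|R| <= r)%N.

(* C is an (n,k,r,t)-SLRC (with \dim C = k stated separately). *)
Definition SLRC (F : fieldType) (n : nat) (C : {vspace 'rV[F]_n}) (r t : nat) : Prop :=
  forall E : {set 'I_n}, (#|E| <= t)%N -> recoverable C E r.

(* Main.v *)
Require Import Defs.
From HB Require Import structures.
From mathcomp Require Import all_boot all_order all_algebra all_field.
From mathcomp Require Import zify.
Import GRing.Theory Num.Theory.
Local Open Scope ring_scope.

Definition dotv {F : finFieldType} {n} (h x : 'rV[F]_n) := \sum_c h 0 c * x 0 c.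
Definition orthC {F : finFieldType} {n} (C : {vspace 'rV[F]_n}) h :=
  [forall x : 'rV[F]_n, (x \in C) ==> (dotv h x == 0)].


Section S.
Variables (F : finFieldType) (n : nat).

Lemma free_row_free p (X : p.-tuple 'rV[F]_n) :
  free X -> row_free (\matrix_(i < p) X`_i).
Proof.
move=> /freeP fX; apply: inj_row_free => v.
rewrite mulmx_sum_row => H.
apply/rowP => i; rewrite mxE.
apply: (fX (fun i => v 0 i)) .
by rewrite -[RHS]H; apply: eq_bigr => j _; rewrite rowK.
Qed.

Lemma span_sub (S : seq 'rV[F]_n) : exists X : seq 'rV[F]_n,
  [/\ free X, {subset X <= S} & forall s, s \in S -> s \in <<X>>%VS].
Proof.
elim: S => [|s S [X0 [f0 sub0 sp0]]].
  by exists [::]; split => //; exact: nil_free.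
case: (boolP (s \in <<X0>>%VS)) => hs.
  exists X0; split => // [x hx|t]; first by rewrite inE sub0 ?orbT.
  by rewrite inE => /orP[/eqP->|/sp0].
exists (s :: X0); split.
- by rewrite free_cons hs f0.
- by move=> x; rewrite !inE => /orP[->|/sub0->] //; rewrite orbT.
- move=> t; rewrite span_cons inE => /orP[/eqP->|/sp0 ht].
    by apply: (subvP (addvSl _ _)); rewrite memv_line.
  exact: (subvP (addvSr _ _)).
Qed.
Lemma dim_bound (C : {vspace 'rV[F]_n}) (X : seq 'rV[F]_n) :
  free X -> all (orthC C) X -> (\dim C + size X <= n)%N.
Proof.
move=> fX oX.
pose B := \matrix_(i < \dim C) (vbasis C)`_i.
pose H := \matrix_(i < size X) (in_tuple X)`_i.
have rB : row_free B by apply: free_row_free; exact: (basis_free (vbasisP C)).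
have rH : row_free H by apply: free_row_free.
have BH : B *m H^T = 0.
  apply/matrixP => i j; rewrite !mxE.
  have /allP /(_ (X`_j)) := oX.
  rewrite mem_nth // => /(_ isT) /forallP /(_ (vbasis C)`_i).
  rewrite vbasis_mem ?mem_nth ?size_tuple //= => /eqP h; rewrite -[RHS]h.
  by apply: eq_bigr => c _; rewrite !mxE mulrC.
have hsub : (B <= kermx H^T)%MS by apply/sub_kermxP.
have := mxrankS hsub.
rewrite mxrank_ker mxrank_tr (eqP rB) (eqP rH).
have := rank_leq_col H; rewrite (eqP rH).
move=> h1 h2; apply: (@leq_trans (n - size X + size X)); [by rewrite leq_add2r | by rewrite subnK].
Qed.
End S.


Section Count.
Local Open Scope nat_scope.
Variables (m n r : nat) (nz : 'I_m -> 'I_n -> bool).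
Let S ρ := [set c | nz ρ c].
Let T c := [set ρ | nz ρ c].
Let O := [set c | #|T c| == 1].
Let inA ρ := 0 < #|S ρ :&: O|.
Let val ρ c := if c \in O then (2 * r).+1 else if inA ρ then r else r.+1.

Hypotheses (r1 : 1 <= r)
  (rowb : forall ρ, #|S ρ| <= r.+1)
  (F1 : forall c, exists ρ, nz ρ c)
  (F2 : forall ρ i j, i != j -> nz ρ i -> nz ρ j -> #|T i| = 1 -> #|T j| = 1 -> False)
  (F3 : forall j ρ1 ρ2 i1 i2, T j = [set ρ1; ρ2] -> ρ1 != ρ2 -> nz ρ1 i1 -> nz ρ2 i2 ->
          #|T i1| = 1 -> #|T i2| = 1 -> False).

Lemma row_sum ρ : \sum_(c in S ρ) val ρ c <= r.+1 ^ 2.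
Proof.
rewrite (big_setID O).
have e1 : \sum_(c in S ρ :&: O) val ρ c = \sum_(c in S ρ :&: O) (2 * r).+1.
  by apply: eq_bigr => c; rewrite inE /val => /andP[_ ->].
have e2 : \sum_(c in S ρ :\: O) val ρ c =
          \sum_(c in S ρ :\: O) (if inA ρ then r else r.+1).
  by apply: eq_bigr => c; rewrite inE /val => /andP[/negbTE -> _].
rewrite e1 e2 !sum_nat_const.
have hc := cardsID O (S ρ); have hr := rowb ρ.
have hu : #|S ρ :&: O| <= 1.
  rewrite leqNgt; apply/negP => /card_gt1P [x [y [hx hy hxy]]].
  move: hx hy; rewrite !inE => /andP[hx ox] /andP[hy oy].
  exact: (F2 _ _ _ hxy hx hy (eqP ox) (eqP oy)).
rewrite /inA /=; case: (ltnP 0 #|S ρ :&: O|) => h.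
  have -> : #|S ρ :&: O| = 1 by lia.
  have hd : #|S ρ :\: O| <= r by lia.
  have := leq_mul hd (leqnn r); rewrite !expnS expn0.
  set d := #|S ρ :\: O|; lia.
have -> : #|S ρ :&: O| = 0 by lia.
have hd : #|S ρ :\: O| <= r.+1 by lia.
have := leq_mul hd (leqnn r.+1); rewrite !expnS expn0.
set d := #|S ρ :\: O|; lia.
Qed.

Lemma col_sum c : (2 * r).+1 <= \sum_(ρ in T c) val ρ c.
Proof.
case: (boolP (c \in O)) => hO.
  have e : \sum_(ρ in T c) val ρ c = \sum_(ρ in T c) (2 * r).+1.
    by apply: eq_bigr => ρ _; rewrite /val hO.
  by move: hO; rewrite e sum_nat_const inE => /eqP ->; rewrite mul1n.
have hT : 0 < #|T c|.
  by case: (F1 c) => ρ h; apply/card_gt0P; exists ρ; rewrite inE.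
have hT1 : #|T c| != 1 by move: hO; rewrite inE.
have lb : #|T c| * r <= \sum_(ρ in T c) val ρ c.
  rewrite -sum_nat_const; apply: leq_sum => ρ _; rewrite /val (negbTE hO).
  by case: (inA ρ).
case: (ltnP 2 #|T c|) => h3; first nia.
have /cards2P [ρ1 [ρ2 [hne hTe]]] : #|T c| == 2 by apply/eqP; lia.
rewrite hTe big_setU1 ?inE //= big_set1 /val (negbTE hO).
case h1 : (inA ρ1); case h2 : (inA ρ2); try lia.
exfalso.
move: h1 h2; rewrite /inA => /card_gt0P [i1 hi1] /card_gt0P [i2 hi2].
move: hi1 hi2; rewrite !inE => /andP [n1 /eqP o1] /andP [n2 /eqP o2].
exact: (F3 _ _ _ _ _ hTe hne n1 n2 o1 o2).
Qed.

Lemma count_bound : (2 * r).+1 * n <= r.+1 ^ 2 * m.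
Proof.
have e : forall ρ, \sum_(c in S ρ) val ρ c = \sum_c (nz ρ c) * val ρ c.
  move=> ρ; rewrite big_mkcond; apply: eq_bigr => c _; rewrite inE.
  by case: (nz ρ c); rewrite ?mul1n ?mul0n.
have e' : forall c, \sum_(ρ in T c) val ρ c = \sum_ρ (nz ρ c) * val ρ c.
  move=> c; rewrite big_mkcond; apply: eq_bigr => ρ _; rewrite inE.
  by case: (nz ρ c); rewrite ?mul1n ?mul0n.
have up : \sum_ρ \sum_c (nz ρ c) * val ρ c <= \sum_(ρ < m) r.+1 ^ 2.
  by apply: leq_sum => ρ _; rewrite -e row_sum.
have lo : \sum_(c < n) (2 * r).+1 <= \sum_c \sum_ρ (nz ρ c) * val ρ c.
  by apply: leq_sum => c _; rewrite -e' col_sum.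
rewrite exchange_big /= in up.
move: (leq_trans lo up); rewrite !sum_nat_const !card_ord.
by rewrite mulnC [X in _ <= X]mulnC.
Qed.
End Count.
Lemma recover_check (F : finFieldType) n (C : {vspace 'rV[F]_n}) r (E : {set 'I_n}) :
  SLRC C r 3 -> (#|E| <= 3)%N -> E != set0 ->
  exists x, x \in E /\ exists h : 'rV[F]_n, [/\ orthC C h,
     (#|[set c | (h 0 c != 0)%R]| <= r.+1)%N, h 0 x != 0 &
     forall y, y \in E -> y != x -> h 0 y = 0].
Proof.
move=> slrc hE hne; case: (slrc E hE) => s [us [sE hs]].
case: s us sE hs => [|x s2] us sE hs.
  move: hne; rewrite -sE; case/set0Pn => z; by rewrite inE.
have [R [[xR [a [anz ha]]] [Rsub Rcard]]] := hs [::] s2 x erefl.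
have xE : x \in E by rewrite -sE inE mem_head.
exists x; split => //.
pose h : 'rV[F]_n := \row_c ((c == x)%:R - (c \in R)%:R * a c).
have notR : forall y, y \in E -> y \notin R.
  move=> y yE; apply/negP => /(subsetP Rsub); rewrite !inE yE /=.
  by rewrite in_nil.
exists h; split.
- apply/forallP => z; apply/implyP => zC; apply/eqP.
  rewrite /dotv.
  under eq_bigr do rewrite mxE mulrBl.
  rewrite sumrB (bigD1 x) //= eqxx mul1r big1 => [|c /negbTE ->]; last by rewrite mul0r.
  rewrite addr0 (ha z zC) big_mkcond /=; apply/eqP; rewrite subr_eq0; apply/eqP.
  by apply: eq_bigr => c _; case: (c \in R); rewrite ?mul1r ?mul0r.
- apply: (@leq_trans #|x |: R|); last by rewrite cardsU1 xR.
  apply: subset_leq_card; apply/subsetP => c; rewrite !inE mxE.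
  by case: (c == x) => //=; case: (c \in R) => //=; rewrite mul0r subrr eqxx.
- by rewrite mxE eqxx (negbTE xR) mul0r subr0 oner_neq0.
- move=> y yE yx; rewrite mxE (negbTE yx) (negbTE (notR y yE)) mul0r subrr //.
Qed.

Section Main.
Variables (F : finFieldType) (n : nat) (X : seq 'rV[F]_n).
Let m := size X.
Definition lin (cf : 'I_m -> F) (y : 'I_n) := \sum_(ρ < m) cf ρ * X`_ρ 0 y.
Let T (c : 'I_n) := [set ρ : 'I_m | X`_ρ 0 c != 0].

Lemma lin_T cf c : lin cf c = \sum_(ρ in T c) cf ρ * X`_ρ 0 c.
Proof.
rewrite /lin [RHS]big_mkcond /=; apply: eq_bigr => ρ _; rewrite inE.
by case: (X`_ρ 0 c =P 0) => /= [->|]; rewrite ?mulr0.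
Qed.

Lemma lin_single cf c ρ : T c = [set ρ] -> lin cf c = cf ρ * X`_ρ 0 c.
Proof. by move=> h; rewrite lin_T h big_set1. Qed.

Lemma lin_pair cf c ρ1 ρ2 : ρ1 != ρ2 -> T c = [set ρ1; ρ2] ->
  lin cf c = cf ρ1 * X`_ρ1 0 c + cf ρ2 * X`_ρ2 0 c.
Proof.
by move=> hne h; rewrite lin_T h big_setU1 ?big_set1 ?inE.
Qed.
End Main.
Arguments lin {F n} X cf y.
Arguments lin_single {F n X cf c ρ}.
Arguments lin_pair {F n X cf c ρ1 ρ2}.

Lemma T_single (F : finFieldType) n (X : seq 'rV[F]_n) (c : 'I_n) (ρ : 'I_(size X)) :
  (X`_ρ 0 c != 0) -> #|[set ρ' : 'I_(size X) | X`_ρ' 0 c != 0]| = 1%N ->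
  [set ρ' : 'I_(size X) | X`_ρ' 0 c != 0] = [set ρ].
Proof.
move=> h /eqP /cards1P [x hx]; rewrite hx.
have : ρ \in [set ρ' : 'I_(size X) | X`_ρ' 0 c != 0] by rewrite inE.
by rewrite hx inE => /eqP ->.
Qed.

Lemma mul_ne0 (F : finFieldType) (a b : F) : a * b != 0 -> a != 0.
Proof. by apply: contra => /eqP ->; rewrite mul0r. Qed.

Lemma mul_eq0_l (F : finFieldType) (a b : F) : a * b = 0 -> b != 0 -> a = 0.
Proof. by move/eqP; rewrite mulf_eq0 => /orP[/eqP //|/eqP -> /eqP]. Qed.

Arguments mul_eq0_l {F a b}.
Arguments mul_ne0 {F a b}.

Theorem theorem1 (F : finFieldType) (n k r : nat) (C : {vspace 'rV[F]_n}) :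
  (2 <= r)%N -> (r < k)%N -> \dim C = k -> SLRC C r 3 ->
  (k%:R / n%:R : rat) <= (r%:R / (r.+1)%:R) ^+ 2.
Proof.
move=> r2 rk dC slrc.
pose LCb (h : 'rV[F]_n) := orthC C h && (#|[set c | (h 0 c != 0)%R]| <= r.+1)%N.
have [X [fX subX spX]] := @span_sub F n (filter LCb (enum 'rV[F]_n)).
have XLC : forall ρ : 'I_(size X), LCb X`_ρ.
  by move=> ρ; have := subX _ (mem_nth 0 (ltn_ord ρ)); rewrite mem_filter => /andP[].
have hLC : forall h, LCb h -> exists cf : 'I_(size X) -> F, forall y, h 0 y = lin X cf y.
  move=> h hh.
  have hs : h \in <<in_tuple X>>%VS by apply: spX; rewrite mem_filter hh mem_enum.
  exists (fun i => coord (in_tuple X) i h) => y.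
  rewrite {1}(coord_span hs) summxE /lin; apply: eq_bigr => i _; by rewrite mxE.
have hdim : (\dim C + size X <= n)%N.
  apply: dim_bound => //; apply/allP => x /subX; rewrite mem_filter.
  by case/andP => /andP[].
have key : forall E : {set 'I_n}, (#|E| <= 3)%N -> E != set0 -> exists x, x \in E /\
   exists cf, lin X cf x != 0 /\ forall y, y \in E -> y != x -> lin X cf y = 0.
  move=> E hE hne; have [x [xE [h [ho hw hx hy]]]] := @recover_check F n C r E slrc hE hne.
  have [cf hcf] := hLC h (introT andP (conj ho hw)).
  exists x; split => //; exists cf; split; first by rewrite -hcf.
  by move=> y yE yx; rewrite -hcf; exact: hy.
pose nz (ρ : 'I_(size X)) (c : 'I_n) := X`_ρ 0 c != 0.
have hcount := @count_bound (size X) n r nz (ltnW r2).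
have hT1 : forall ρ c, nz ρ c -> #|[set ρ0 | nz ρ0 c]| = 1%N ->
    [set ρ0 | nz ρ0 c] = [set ρ] by move=> ρ c; exact: T_single.
have bound := hcount _ _ _ _.
have {bound} bound : ((2 * r).+1 * n <= r.+1 ^ 2 * size X)%N.
  apply: bound.
  - by move=> ρ; have /andP[_] := XLC ρ.
  - move=> c.
    have e1 : (#|[set c]| <= 3)%N by rewrite cards1.
    have e2 : [set c] != set0 by apply/set0Pn; exists c; rewrite !inE eqxx.
    have [x [xE [cf [hx _]]]] := key [set c] e1 e2.
    move: xE hx; rewrite inE => /eqP ->.
    case: (pickP (fun ρ => nz ρ c)) => [ρ hρ|none]; first by exists ρ.
    rewrite /lin big1 ?eqxx // => ρ _.
    by have := none ρ; rewrite /nz => /negbFE/eqP ->; rewrite mulr0.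
  - move=> ρ i j hij ni nj ci cj.
    have Ti := hT1 _ _ ni ci; have Tj := hT1 _ _ nj cj.
    have e1 : (#|[set i; j]| <= 3)%N by rewrite cards2; case: (i != j).
    have e2 : [set i; j] != set0 by apply/set0Pn; exists i; rewrite !inE eqxx.
    have [x [xE [cf [hx hy]]]] := key [set i; j] e1 e2.
    move: xE hx hy; rewrite !inE => /orP[] /eqP ->.
    + rewrite (lin_single Ti) => /mul_ne0 hc hy.
      have hji : j != i by rewrite eq_sym.
      have := hy j (set22 i j) hji; rewrite (lin_single Tj).
      move=> /eqP; by rewrite mulf_eq0 (negbTE hc) (negbTE nj).
    + rewrite (lin_single Tj) => /mul_ne0 hc hy.
      have := hy i (set21 i j) hij; rewrite (lin_single Ti).
      move=> /eqP; by rewrite mulf_eq0 (negbTE hc) (negbTE ni).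
  - move=> j ρ1 ρ2 i1 i2 hTj hne n1 n2 c1 c2.
    have T1 := hT1 _ _ n1 c1; have T2 := hT1 _ _ n2 c2.
    have nj1 : nz ρ1 j by move: (set21 ρ1 ρ2); rewrite -hTj inE.
    have nj2 : nz ρ2 j by move: (set22 ρ1 ρ2); rewrite -hTj inE.
    have cj : #|[set ρ | nz ρ j]| = 2%N by rewrite hTj cards2 hne.
    have ij1 : i1 != j by apply/eqP => e; move: c1; rewrite e cj.
    have ij2 : i2 != j by apply/eqP => e; move: c2; rewrite e cj.
    have i12 : i1 != i2.
      apply/eqP => e; move: T1; rewrite e T2 => /set1_inj e'.
      by rewrite e' eqxx in hne.
    have e1 : (#|[set i1; i2; j]| <= 3)%N.
      have sub : [set i1; i2; j] \subset i1 |: [set i2; j].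
        by apply/subsetP => z; rewrite !inE -orbA.
      apply: (leq_trans (subset_leq_card sub)).
      by rewrite cardsU1 cards2; case: (_ \notin _); case: (_ != _).
    have m1 : i1 \in [set i1; i2; j] by rewrite !inE eqxx.
    have m2 : i2 \in [set i1; i2; j] by rewrite !inE eqxx !orbT.
    have m3 : j \in [set i1; i2; j] by rewrite !inE eqxx !orbT.
    have e2 : [set i1; i2; j] != set0 by apply/set0Pn; exists i1.
    have [x [xE [cf [hx hy]]]] := key _ e1 e2.
    have L1 := @lin_single _ _ _ cf _ _ T1.
    have L2 := @lin_single _ _ _ cf _ _ T2.
    have Lj := @lin_pair _ _ _ cf _ _ _ hne hTj.
    move: xE hx hy; rewrite !inE -orbA => /or3P[] /eqP -> hx hy.
    + have hc : cf ρ1 != 0 by move: hx; rewrite L1 => /mul_ne0.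
      have h2 : cf ρ2 = 0.
        by apply: (mul_eq0_l _ n2); rewrite -L2; apply: hy; rewrite // eq_sym.
      have := hy j m3; rewrite eq_sym ij1 Lj h2 mul0r addr0 => /(_ isT) h1.
      by move: hc; rewrite (mul_eq0_l h1 nj1) eqxx.
    + have hc : cf ρ2 != 0 by move: hx; rewrite L2 => /mul_ne0.
      have h1 : cf ρ1 = 0.
        by apply: (mul_eq0_l _ n1); rewrite -L1; apply: hy.
      have := hy j m3; rewrite eq_sym ij2 Lj h1 mul0r add0r => /(_ isT) h2.
      by move: hc; rewrite (mul_eq0_l h2 nj2) eqxx.
    + have h1 : cf ρ1 = 0.
        by apply: (mul_eq0_l _ n1); rewrite -L1; apply: hy.
      have h2 : cf ρ2 = 0.
        by apply: (mul_eq0_l _ n2); rewrite -L2; apply: hy.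
      by move: hx; rewrite Lj h1 h2 !mul0r addr0 eqxx.
rewrite dC in hdim.
have hk : (k * r.+1 ^ 2 <= r ^ 2 * n)%N.
  rewrite !expnS !expn0 !muln1; nia.
have n0 : (0 < n)%N by lia.
have n0' : (0 : rat) < n%:R by rewrite ltr0n.
have r0' : (0 : rat) < (r.+1 ^ 2)%:R by rewrite ltr0n expn_gt0.
rewrite expr_div_n -!natrX ler_pdivrMr // mulrAC ler_pdivlMr //.
by rewrite -!natrM ler_nat.
Qed.
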